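(* Let $\mathcal{A}$ be a dual Banach algebra. If $\mathcal{A}$ is Connes amenable, then $\mathcal{A}$ is Johnson pseudo-Connes amenable.
   Context: A dual Banach algebra is a Banach algebra $\mathcal{A}$ together with a closed $\mathcal{A}$-submodule $\mathcal{A}_*$ of $\mathcal{A}^*$ such that $\mathcal{A}=(\mathcal{A}_* )^*$. For a Banach $\mathcal{A}$-bimodule $E$, $\sigma wc(E)$ denotes the closed submodule of all $x\in E$ such that the maps $\mathcal{A}\to E$, $a\mapsto a\cdot x$ and $a\mapsto x\cdot a$, are weak$^*$-weak continuous. $\mathcal{A}\hat{\otimes}\mathcal{A}$ is a bimodule via $a\cdot(b\otimes c)=ab\otimes c$, $(b\otimes c)\cdot a=b\otimes ca$, and duals carry the dual module actions. $\pi_{\mathcal{A}}:\mathcal{A}\hat{\otimes}\mathcal{A}\to\mathcal{A}$ is the multiplication map $a\otimes b\mapsto ab$; since $\pi_{\mathcal{A}}^*$ maps $\mathcal{A}_*$ into $\sigma wc((\mathcal{A}\hat{\otimes}\mathcal{A})^* )$, $\pi_{\mathcal{A}}^{**}$ induces a bimodule map $\pi_{\sigma wc}:(\sigma wc((\mathcal{A}\hat{\otimes}\mathcal{A})^* ))^*\to\mathcal{A}$. $\mathcal{A}$ is Connes amenable if there is $M\in(\sigma wc((\mathcal{A}\hat{\otimes}\mathcal{A})^* ))^*$ with $a\cdot M=M\cdot a$ and $a\,\pi_{\sigma wc}(M)=a$ for all $a\in\mathcal{A}$. Let $i_{\mathcal{A}_*}:\mathcal{A}_*\hookrightarrow\mathcal{A}^*$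 be the canonical embedding, so $i_{\mathcal{A}_*}^*:\mathcal{A}^{**}\to\mathcal{A}$. $\mathcal{A}$ is Johnson pseudo-Connes amenable if there is a (not necessarily bounded) net $(m_\alpha)$ in $(\mathcal{A}\hat{\otimes}\mathcal{A})^{**}$ such that $\langle T,a\cdot m_\alpha\rangle=\langle T,m_\alpha\cdot a\rangle$ for all $a\in\mathcal{A}$, $T\in\sigma wc((\mathcal{A}\hat{\otimes}\mathcal{A})^* )$ and all $\alpha$, and $i_{\mathcal{A}_*}^*\pi_{\mathcal{A}}^{**}(m_\alpha)a\to a$ for every $a\in\mathcal{A}$. *)

(* Defs.v *)
From mathcomp Require Import all_boot all_order all_algebra.
From mathcomp Require Import complex.
From mathcomp Require Import all_classical all_reals all_analysis.
Import numFieldNormedType.Exports.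
Import Order.TTheory GRing.Theory Num.Theory.

Set Implicit Arguments.
Unset Strict Implicit.
Unset Printing Implicit Defensive.

Local Open Scope ring_scope.

Section DualBanach.
Context {R : realType} {A : completeNormedModType R[i]}.
Variable mul : A -> A -> A.

Definition banach_algebra : Prop :=
  [/\ (forall (k : R[i]) (a b c : A), mul (k *: a + b) c = k *: mul a c + mul b c),
      (forall (k : R[i]) (a b c : A), mul a (k *: b + c) = k *: mul a b + mul a c),
      (forall a b c : A, mul a (mul b c) = mul (mul a b) c) &
      (forall a b : A, `|mul a b| <= `|a| * `|b|)].

Definition is_lin (f : A -> R[i]) : Prop :=
  forall (k : R[i]) (x y : A), f (k *: x + y) = k * f x + f y.

Definition opnorm_le (f : A -> R[i]) (t : R[i]) : Prop :=
  forall x : A, `|f x| <= t * `|x|.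

Definition in_dual (f : A -> R[i]) : Prop :=
  is_lin f /\ exists t, 0 <= t /\ opnorm_le f t.

(* dual module actions on A^*:  <a.f, x> = <f, x a>,  <f.a, x> = <f, a x> *)
Definition dual_lact (a : A) (f : A -> R[i]) : A -> R[i] := fun x => f (mul x a).
Definition dual_ract (f : A -> R[i]) (a : A) : A -> R[i] := fun x => f (mul a x).

(* A_* is a closed A-submodule of A^* and A = (A_* )^* canonically
   (a |-> (f |-> f a) is an isometric isomorphism of A onto (A_* )^* ). *)
Definition dual_banach_algebra (Ast : set (A -> R[i])) : Prop :=
  [/\
      (forall f, Ast f -> in_dual f) /\
      Ast (fun _ => 0) /\
      (forall (k : R[i]) f g, Ast f -> Ast g -> Ast (fun x => k * f x + g x)),
      (forall f, in_dual f ->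
         (forall eps : R[i], 0 < eps ->
            exists g, Ast g /\ opnorm_le (fun x => f x - g x) eps) -> Ast f),
      (forall a f, Ast f -> Ast (dual_lact a f) /\ Ast (dual_ract f a)),
      (* the canonical map A -> (A_* )^* is isometric *)
      (forall (a : A) (eps : R[i]), 0 < eps ->
         exists f, [/\ Ast f, opnorm_le f 1 & `|a| - eps <= `|f a|]) &
      (* ... and onto (A_* )^* *)
      (forall phi : (A -> R[i]) -> R[i],
         (forall (k : R[i]) f g, Ast f -> Ast g ->
             phi (fun x => k * f x + g x) = k * phi f + phi g) ->
         (exists c, 0 <= c /\ forall f t, Ast f -> 0 <= t -> opnorm_le f t ->
             `|phi f| <= c * t) ->
         exists a : A, forall f, Ast f -> phi f = f a)].

(* weak* continuity (topology sigma(A, A_* )) of a map g : A -> C,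
   via the basic weak* neighbourhoods of a point x0 *)
Definition wstar_cont (Ast : set (A -> R[i])) (g : A -> R[i]) : Prop :=
  forall (x0 : A) (eps : R[i]), 0 < eps ->
    exists (n : nat) (fs : 'I_n -> A -> R[i]) (delta : R[i]),
      [/\ (forall j, Ast (fs j)), 0 < delta &
          forall x : A, (forall j, `|fs j x - fs j x0| < delta) ->
                        `|g x - g x0| < eps].

(* ---------- E = (A \hat\otimes A)^* = bounded bilinear forms on A x A ---------- *)
Definition is_bilin (T : A -> A -> R[i]) : Prop :=
  (forall (k : R[i]) (b b' c : A), T (k *: b + b') c = k * T b c + T b' c) /\
  (forall (k : R[i]) (b c c' : A), T b (k *: c + c') = k * T b c + T b c').

Definition bil_norm_le (T : A -> A -> R[i]) (t : R[i]) : Prop :=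
  forall b c : A, `|T b c| <= t * `|b| * `|c|.

Definition inE (T : A -> A -> R[i]) : Prop :=
  is_bilin T /\ exists t, 0 <= t /\ bil_norm_le T t.

(* dual module actions on E:  <a.T, b(x)c> = <T, b(x)ca>,  <T.a, b(x)c> = <T, ab(x)c> *)
Definition lactE (a : A) (T : A -> A -> R[i]) : A -> A -> R[i] :=
  fun b c => T b (mul c a).
Definition ractE (T : A -> A -> R[i]) (a : A) : A -> A -> R[i] :=
  fun b c => T (mul a b) c.

Definition dual_on (S : set (A -> A -> R[i])) (Phi : (A -> A -> R[i]) -> R[i]) : Prop :=
  (forall (k : R[i]) T U, S T -> S U ->
      Phi (fun b c => k * T b c + U b c) = k * Phi T + Phi U) /\
  (exists c, 0 <= c /\ forall T t, S T -> 0 <= t -> bil_norm_le T t ->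
      `|Phi T| <= c * t).

(* sigma wc(E): a |-> a.T and a |-> T.a are weak*-weak continuous
   (weak topology of E = sigma(E, E^* ), E^* = dual_on inE) *)
Definition sigma_wc (Ast : set (A -> R[i])) (T : A -> A -> R[i]) : Prop :=
  inE T /\
  forall Phi, dual_on inE Phi ->
    wstar_cont Ast (fun a => Phi (lactE a T)) /\
    wstar_cont Ast (fun a => Phi (ractE T a)).

Definition pi_star (f : A -> R[i]) : A -> A -> R[i] := fun b c => f (mul b c).

(* Connes amenability:  M in (sigma wc(E))^*, a.M = M.a, a pi_sigmawc(M) = a,
   where pi_sigmawc(M) is the element e of A = (A_* )^* with <f, e> = <pi^* f, M>. *)
Definition connes_amenable (Ast : set (A -> R[i])) : Prop :=
  exists M : (A -> A -> R[i]) -> R[i],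
    [/\ dual_on (sigma_wc Ast) M,
        (forall (a : A) T, sigma_wc Ast T -> M (ractE T a) = M (lactE a T)) &
        exists e : A, (forall f, Ast f -> f e = M (pi_star f)) /\
                      (forall a : A, mul a e = a)].

(* Johnson pseudo-Connes amenability: a net (m_alpha) in E^* = (A \hat\otimes A)^**
   with <T, a.m_alpha> = <T, m_alpha.a> for T in sigma wc(E), and
   i^*_{A_*} pi_A^**(m_alpha) a -> a in norm, where
   e_alpha := i^*_{A_*} pi_A^**(m_alpha) is the element of A with
   <f, e_alpha> = <pi^* f, m_alpha> for all f in A_*. *)
Definition johnson_pseudo_connes_amenable (Ast : set (A -> R[i])) : Prop :=
  exists (I : Type) (le : I -> I -> Prop)
         (m : I -> (A -> A -> R[i]) -> R[i]) (e : I -> A),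
    [/\
        inhabited I /\ (forall i, le i i) /\
        (forall i j k, le i j -> le j k -> le i k) /\
        (forall i j, exists k, le i k /\ le j k),
        (forall i, dual_on inE (m i)),
        (forall i (a : A) T, sigma_wc Ast T -> m i (ractE T a) = m i (lactE a T)),
        (forall i f, Ast f -> f (e i) = m i (pi_star f)) &
        (forall (a : A) (eps : R[i]), 0 < eps ->
           exists i0, forall i, le i0 i -> `|mul (e i) a - a| < eps)].

End DualBanach.

(* Main.v *)
Require Import Defs.
From mathcomp Require Import all_boot all_order all_algebra.
From mathcomp Require Import complex.
From mathcomp Require Import all_classical all_reals all_analysis.
From mathcomp Require Import ring lra.
Import numFieldNormedType.Exports.
Import Order.TTheory GRing.Theory Num.Theory.
Set Implicit Arguments.
Unset Strict Implicit.
Unset Printing Implicit Defensive.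
Local Open Scope ring_scope.
Local Open Scope classical_set_scope.

Section HahnBanach.
Context {R : realType} {V : lmodType R}.
Variables (D S : set V) (p f : V -> R).
Hypotheses
 (D0 : D 0) (DL : forall r x y, D x -> D y -> D (r *: x + y))
 (SD : S `<=` D) (S0 : S 0) (SL : forall r x y, S x -> S y -> S (r *: x + y))
 (pD : forall x y, D x -> D y -> p (x + y) <= p x + p y)
 (pZ : forall r x, D x -> 0 < r -> p (r *: x) = r * p x)
 (fL : forall r x y, S x -> S y -> f (r *: x + y) = r * f x + f y)
 (fp : forall x, S x -> f x <= p x).

Definition graphP (G : set (V * R)) :=
  [/\ forall v a b, G (v,a) -> G (v,b) -> a = b,
      forall r v1 a1 v2 a2, G (v1,a1) -> G (v2,a2) -> G (r *: v1 + v2, r * a1 + a2),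
      forall v a, G (v,a) -> D v /\ a <= p v &
      forall v, S v -> G (v, f v)].

Let f0 : f 0 = 0.
Proof.
have := fL 1 S0 S0; rewrite scaler0 addr0 mul1r => h.
by have := congr1 (fun z => z - f 0) h; rewrite subrr addrK => <-.
Qed.

Let DD x y : D x -> D y -> D (x + y).
Proof. by move=> Dx Dy; have := DL 1 Dx Dy; rewrite scale1r. Qed.
Let DZ r x : D x -> D (r *: x).
Proof. by move=> Dx; have := DL r Dx D0; rewrite addr0. Qed.
Let DN x : D x -> D (- x).
Proof. by move=> Dx; have := DZ (-1) Dx; rewrite scaleN1r. Qed.

Let G00 G : graphP G -> G (0, 0).
Proof. by case=> _ _ _ /(_ 0 S0); rewrite f0. Qed.

Let GZ G r v a : graphP G -> G (v, a) -> G (r *: v, r * a).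
Proof.
move=> gG Gva; case: (gG) => _ cl _ _.
by have := cl r _ _ _ _ Gva (G00 gG); rewrite !addr0.
Qed.

Lemma extend G : graphP G -> forall x, D x -> ~ (exists a, G (x,a)) ->
  exists G', graphP G' /\ G `<=` G' /\ ~ (G' `<=` G).
Proof.
move=> gG x Dx nWx; case: (gG) => gfun gcl gdom gS.
have bnd w a w' a' : G (w,a) -> G (w',a') -> a - p (w - x) <= p (w' + x) - a'.
  move=> Gw Gw'; have := gcl 1 _ _ _ _ Gw Gw'; rewrite scale1r mul1r => Gs.
  have [Dw _] := gdom _ _ Gw; have [Dw' _] := gdom _ _ Gw'.
  have [_ h1] := gdom _ _ Gs.
  have h2 := pD (DD Dw (DN Dx)) (DD Dw' Dx).
  have e : w - x + (w' + x) = w + w' by rewrite addrACA addNr addr0.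
  rewrite e in h2; lra.
pose E := [set z | exists w a, G (w,a) /\ z = a - p (w - x)].
pose y := sup E.
have E0 : E (0 - p (0 - x)) by exists 0, 0; split => //; exact: G00.
have ubE : has_ubound E.
  exists (p (0 + x) - 0) => z [w [a [Gw ->]]]; exact: bnd (G00 gG).
have hy1 w a : G (w,a) -> a - p (w - x) <= y.
  by move=> Gw; apply: ub_le_sup => //; exists w, a.
have hy2 w a : G (w,a) -> y <= p (w + x) - a.
  move=> Gw; apply: ge_sup; first by exists (0 - p (0 - x)).
  by move=> z [w' [a' [Gw' ->]]]; exact: bnd.
pose G' := [set va : V * R | exists w a r, G (w,a) /\ va = (w + r *: x, a + r * y)].
have GG' : G `<=` G'.
  by move=> [v a] Gv; exists v, a, 0; rewrite scale0r mul0r !addr0.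
exists G'; split; last split => //; last first.
  move=> /(_ (x, y)) h.
  have : G' (x, y) by exists 0, 0, 1; rewrite scale1r mul1r !add0r; split => //; exact: G00.
  by move/h => Gxy; apply: nWx; exists y.
split.
- move=> v b1 b2 [w1 [a1 [r1 [G1 [e1 ->]]]]] [w2 [a2 [r2 [G2 [e2 ->]]]]].
  have [r12|r12] := eqVneq r1 r2.
    rewrite -r12 in e2 *; rewrite e1 in e2; move/addIr: e2 => ew.
    by rewrite ew in G1; rewrite (gfun _ _ _ G1 G2).
  exfalso; apply: nWx.
  have Gd := gcl (-1) _ _ _ _ G1 G2; rewrite scaleN1r in Gd.
  exists ((r1 - r2)^-1 * (-1 * a1 + a2)).
  have -> : x = (r1 - r2)^-1 *: (- w1 + w2).
    have e : (r1 - r2) *: x = - w1 + w2.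
      have ee : w1 + r1 *: x = w2 + r2 *: x by rewrite -e1 -e2.
      by rewrite scalerBl; apply: (addrI w1); rewrite [RHS]addrA addrN add0r addrA ee addrK.
    by rewrite -e scalerA mulVf ?scale1r // subr_eq0.
  exact: GZ.
- move=> r v1 b1 v2 b2 [w1 [a1 [r1 [G1 [-> ->]]]]] [w2 [a2 [r2 [G2 [-> ->]]]]].
  exists (r *: w1 + w2), (r * a1 + a2), (r * r1 + r2); split; first exact: gcl.
  congr (_, _); last by ring.
  by rewrite scalerDr scalerA scalerDl addrACA.
- move=> v b [w [a [r [Gw [-> ->]]]]].
  have [Dw pa] := gdom _ _ Gw.
  split; first by rewrite addrC; exact: DL.
  have [rlt|rgt|->] := ltgtP r 0; last by rewrite scale0r mul0r !addr0.
  + pose s := - r; have s0 : 0 < s by rewrite /s oppr_gt0.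
    have Gs := GZ s^-1 gG Gw.
    have h := hy1 _ _ Gs.
    have Dws : D (s^-1 *: w - x) by apply: DD; [exact: DZ | exact: DN].
    have ev : w + r *: x = s *: (s^-1 *: w - x).
      by rewrite scalerBr scalerA mulfV ?gt_eqF // scale1r /s scaleNr opprK.
    rewrite ev pZ //.
    have := ler_wpM2l (ltW s0) h; rewrite mulrBr mulrA mulfV ?gt_eqF // mul1r.
    rewrite /s; lra.
  + have Gs := GZ r^-1 gG Gw.
    have h := hy2 _ _ Gs.
    have Dws : D (r^-1 *: w + x) by apply: DD; [exact: DZ | done].
    have ev : w + r *: x = r *: (r^-1 *: w + x).
      by rewrite scalerDr scalerA mulfV ?gt_eqF // scale1r.
    rewrite ev pZ //.
    have := ler_wpM2l (ltW rgt) h; rewrite mulrBr mulrA mulfV ?gt_eqF // mul1r.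
    lra.
- by move=> v Sv; apply: GG'; exact: gS.
Qed.

Lemma hahn_banach : exists g : V -> R,
  [/\ forall r x y, D x -> D y -> g (r *: x + y) = r * g x + g y,
      forall x, S x -> g x = f x &
      forall x, D x -> g x <= p x].
Proof.
pose G0 := [set va : V * R | S va.1 /\ va.2 = f va.1].
have gG0 : graphP G0.
  split.
  - by move=> v a b [_ /= ->] [_ /= ->].
  - move=> r v1 a1 v2 a2 [/= S1 ->] [/= S2 ->]; split => /=; first exact: SL.
    by rewrite fL.
  - by move=> v a [/= Sv ->]; split; [exact: SD | exact: fp].
  - by move=> v Sv; split.
pose T := {G : set (V * R) | graphP G}.
pose t0 : T := exist _ G0 gG0.
pose RT := fun s t : T => `[< proj1_sig s `<=` proj1_sig t >].
have [t tmax] : exists t, premaximal RT t.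
  apply: (ZL_preorder t0).
  - by move=> s; apply/asboolP.
  - by move=> r s u /asboolP h1 /asboolP h2; apply/asboolP => z /h1 /h2.
  move=> Ach Atot.
  have [[s0 As0]|nA] := pselect (exists s, Ach s); last first.
    by exists t0 => s As; exfalso; apply: nA; exists s.
  pose U := [set va | exists s, Ach s /\ proj1_sig s va].
  have tot s1 s2 : Ach s1 -> Ach s2 ->
      proj1_sig s1 `<=` proj1_sig s2 \/ proj1_sig s2 `<=` proj1_sig s1.
    by move=> A1 A2; case: (Atot _ _ A1 A2) => /asboolP h; [left|right].
  have gU : graphP U.
    split.
    - move=> v a b [s1 [A1 h1]] [s2 [A2 h2]].
      case: (tot _ _ A1 A2) => sub.
        by case: (proj2_sig s2) => gf _ _ _; exact: (gf v a b (sub _ h1) h2).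
      by case: (proj2_sig s1) => gf _ _ _; exact: (gf v a b h1 (sub _ h2)).
    - move=> r v1 a1 v2 a2 [s1 [A1 h1]] [s2 [A2 h2]].
      case: (tot _ _ A1 A2) => sub.
        exists s2; split => //.
        by case: (proj2_sig s2) => _ gc _ _; exact: (gc r _ _ _ _ (sub _ h1) h2).
      exists s1; split => //.
      by case: (proj2_sig s1) => _ gc _ _; exact: (gc r _ _ _ _ h1 (sub _ h2)).
    - by move=> v a [s1 [A1 h1]]; case: (proj2_sig s1) => _ _ gd _; exact: gd.
    - move=> v Sv; exists s0; split => //.
      by case: (proj2_sig s0) => _ _ _ gs; exact: gs.
  exists (exist _ U gU) => s As; by apply/asboolP => va sva /=; exists s; split.
move: t tmax => [G gG] tmax.
have full x : D x -> exists a, G (x, a).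
  move=> Dx; apply: contrapT => nW.
  have [G' [gG' [sub nsub]]] := extend gG Dx nW.
  have /asboolP := tmax (exist _ G' gG') (asboolT sub).
  by [].
pose g x := if pselect (exists a, G (x, a)) is left h then projT1 (cid h) else 0.
have gP x : D x -> G (x, g x).
  move=> Dx; rewrite /g; case: pselect => [h|h]; last by exfalso; apply: h; exact: full.
  exact: projT2 (cid h).
have [gfun gcl gdom gS] := gG.
exists g; split.
- move=> r x y Dx Dy; apply: (gfun (r *: x + y)); first exact/gP/DL.
  by apply: gcl; exact: gP.
- by move=> x Sx; apply: (gfun x); [exact/gP/SD | exact: gS].
- by move=> x Dx; have [] := gdom _ _ (gP _ Dx).
Qed.

End HahnBanach.


Local Open Scope complex_scope.
Local Notation Rec := complex.Re.
Local Notation Imc := complex.Im.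


Section Bridge.
Context {R : realType} {A : completeNormedModType R[i]}.
Local Definition V := A -> A -> Rcomplex R.
Lemma scalecE (r : R) (z : R[i]) : (r *: (z : Rcomplex R)) = r%:C * z.
Proof. by case: z => a b; rewrite /GRing.scale /=; simpc. Qed.
Lemma VE (r : R) (x y : V) : r *: x + y = (fun b c => r%:C * x b c + y b c : R[i]).
Proof.
apply/funext => b; apply/funext => c.
by change (r *: (x b c : Rcomplex R) + y b c = r%:C * x b c + y b c); rewrite scalecE.
Qed.
Lemma V0 : (0 : V) = (fun _ _ => 0 : R[i]).
Proof. by []. Qed.
Lemma VD (x y : V) : x + y = (fun b c => x b c + y b c : R[i]).
Proof. by []. Qed.
Lemma ReM (r : R) (z : R[i]) : complex.Re (r%:C * z) = r * complex.Re z.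
Proof. by case: z => a b /=; rewrite mul0r subr0. Qed.
End Bridge.

Section Main.
Context {R : realType} {A : completeNormedModType R[i]} (mul : A -> A -> A)
  (Ast : set (A -> R[i])).
Hypothesis BA : banach_algebra mul.
Hypothesis DB : dual_banach_algebra mul Ast.

Let mulDl k a b c : mul (k *: a + b) c = k *: mul a c + mul b c.
Proof. by case: BA. Qed.
Let mulDr k a b c : mul a (k *: b + c) = k *: mul a b + mul a c.
Proof. by case: BA. Qed.
Let mulA a b c : mul a (mul b c) = mul (mul a b) c.
Proof. by case: BA. Qed.
Let mulN a b : `|mul a b| <= `|a| * `|b|.
Proof. by case: BA. Qed.

Let AstD f : Ast f -> in_dual f.
Proof. by case: DB => [[h _] _ _ _ _]; exact: h. Qed.
Let Ast0 : Ast (fun _ => 0).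
Proof. by case: DB => [[_ [h _]] _ _ _ _]. Qed.
Let Astl a f : Ast f -> Ast (dual_lact mul a f).
Proof. by case: DB => [_ _ h _ _] /(h a) []. Qed.
Let Astr a f : Ast f -> Ast (dual_ract mul f a).
Proof. by case: DB => [_ _ h _ _] /(h a) []. Qed.

Local Notation inEA := (@Defs.inE R A).
Local Notation wsc := (@wstar_cont R A Ast).
Local Notation swc := (@sigma_wc R A mul Ast).
Lemma inE_comb k T U : inEA T -> inEA U -> inEA (fun b c => k * T b c + U b c).
Proof.
move=> [[T1 T2] [tT [tT0 bT]]] [[U1 U2] [tU [tU0 bU]]]; split.
  split=> k' x y z /=; rewrite ?T1 ?T2 ?U1 ?U2; ring.
exists (`|k| * tT + tU); split; first by rewrite addr_ge0 // mulr_ge0.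
move=> b c; apply: le_trans (ler_normD _ _) _; rewrite normrM !mulrDl.
apply: lerD; last exact: bU.
by rewrite -!mulrA ler_wpM2l // !mulrA; exact: bT.
Qed.

Lemma inE0 : inEA (fun _ _ => 0).
Proof.
split; first by split=> *; rewrite mulr0 addr0.
by exists 0; split => // b c; rewrite normr0 !mul0r.
Qed.

Lemma inE_lact a T : inEA T -> inEA (lactE mul a T).
Proof.
move=> [[T1 T2] [t [t0 bT]]]; split.
  by split=> k x y z; rewrite /lactE ?T1 ?mulDl ?T2.
exists (t * `|a|); split; first by rewrite mulr_ge0.
move=> b c; rewrite /lactE; apply: le_trans (bT _ _) _.
rewrite -!mulrA ler_wpM2l // mulrCA ler_wpM2l // mulrC; exact: mulN.
Qed.

Lemma inE_ract a T : inEA T -> inEA (ractE mul T a).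
Proof.
move=> [[T1 T2] [t [t0 bT]]]; split.
  by split=> k x y z; rewrite /ractE ?mulDr ?T1 ?T2.
exists (t * `|a|); split; first by rewrite mulr_ge0.
move=> b c; rewrite /ractE; apply: le_trans (bT _ _) _.
rewrite -!mulrA ler_wpM2l // !mulrA ler_wpM2r //; exact: mulN.
Qed.

Lemma wsc_Ast F : Ast F -> wsc F.
Proof.
move=> AF x0 eps eps0; by exists 1%N, (fun _ => F), eps; split => // x /(_ ord0).
Qed.

Lemma wsc_cst z : wsc (fun _ => z).
Proof.
move=> x0 eps eps0; exists 0%N, (fun _ => fun _ => 0), 1; split => // x _.
by rewrite subrr normr0.
Qed.

Lemma wsc_comb k g1 g2 : wsc g1 -> wsc g2 -> wsc (fun a => k * g1 a + g2 a).
Proof.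
move=> c1 c2 x0 eps eps0.
have e20 : 0 < eps / 2 by rewrite divr_gt0.
have k10 : 0 < `|k| + 1 by rewrite ltr_wpDl.
have [n1 [fs1 [d1 [A1 d10 h1]]]] := c1 x0 _ (divr_gt0 e20 k10).
have [n2 [fs2 [d2 [A2 d20 h2]]]] := c2 x0 _ e20.
pose fs (j : 'I_(n1 + n2)) := match fintype.split j with inl j1 => fs1 j1 | inr j2 => fs2 j2 end.
exists (n1 + n2)%N, fs, (d1 * (d2 / (d1 + d2))); split.
- by move=> j; rewrite /fs; case: fintype.split.
- by rewrite mulr_gt0 // divr_gt0 // addr_gt0.
move=> x hx.
have dd : d2 / (d1 + d2) <= 1 by rewrite ler_pdivrMr ?addr_gt0 // mul1r lerDr ltW.
have dd' : d1 / (d1 + d2) <= 1 by rewrite ler_pdivrMr ?addr_gt0 // mul1r lerDl ltW.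
have hx1 : forall j, `|fs1 j x - fs1 j x0| < d1.
  move=> j; have := hx (unsplit (inl j)); rewrite /fs unsplitK => h.
  apply: lt_le_trans h _; apply: le_trans (ler_wpM2l (ltW d10) dd) _; by rewrite mulr1.
have hx2 : forall j, `|fs2 j x - fs2 j x0| < d2.
  move=> j; have := hx (unsplit (inr j)); rewrite /fs unsplitK => h.
  apply: lt_le_trans h _; rewrite mulrCA.
  apply: le_trans (ler_wpM2l (ltW d20) (_ : d1 / (d1 + d2) <= 1)) _; last by rewrite mulr1.
  exact: dd'.
have := h1 x hx1; have := h2 x hx2 => l2 l1.
have -> : k * g1 x + g2 x - (k * g1 x0 + g2 x0) = k * (g1 x - g1 x0) + (g2 x - g2 x0) by ring.
apply: le_lt_trans (ler_normD _ _) _; rewrite normrM.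
have -> : eps = eps / 2 + eps / 2 by rewrite -splitr.
apply: ler_ltD => //.
apply: le_trans (ler_wpM2l (normr_ge0 k) (ltW l1)) _.
rewrite mulrA ler_pdivrMr // mulrDr mulr1 mulrC lerDl; exact: ltW.
Qed.

Lemma wsc_mulr h a : wsc h -> wsc (fun x => h (mul x a)).
Proof.
move=> ch x0 eps eps0; have [n [fs [d [As d0 hh]]]] := ch (mul x0 a) eps eps0.
exists n, (fun j => dual_lact mul a (fs j)), d; split => //.
  by move=> j; exact: Astl.
by move=> x hx; apply: hh.
Qed.

Lemma wsc_mull h a : wsc h -> wsc (fun x => h (mul a x)).
Proof.
move=> ch x0 eps eps0; have [n [fs [d [As d0 hh]]]] := ch (mul a x0) eps eps0.
exists n, (fun j => dual_ract mul (fs j) a), d; split => //.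
  by move=> j; exact: Astr.
by move=> x hx; apply: hh.
Qed.

Lemma bnd_lact a T t : 0 <= t -> bil_norm_le T t -> bil_norm_le (lactE mul a T) (t * `|a|).
Proof.
move=> t0 bT b c; rewrite /lactE; apply: le_trans (bT _ _) _.
rewrite -!mulrA ler_wpM2l // mulrCA ler_wpM2l // mulrC; exact: mulN.
Qed.

Lemma bnd_ract a T t : 0 <= t -> bil_norm_le T t -> bil_norm_le (ractE mul T a) (t * `|a|).
Proof.
move=> t0 bT b c; rewrite /ractE; apply: le_trans (bT _ _) _.
rewrite -!mulrA ler_wpM2l // !mulrA ler_wpM2r //; exact: mulN.
Qed.

Lemma bnd_pi f t : 0 <= t -> opnorm_le f t -> bil_norm_le (pi_star mul f) t.
Proof.
move=> t0 bf b c; rewrite /pi_star; apply: le_trans (bf _) _.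
rewrite -mulrA ler_wpM2l //; exact: mulN.
Qed.

Lemma inE_pi f : Ast f -> inEA (pi_star mul f).
Proof.
move=> /AstD [lf [t [t0 bf]]]; split; last by exists t; split => //; exact: bnd_pi.
by split=> k x y z; rewrite /pi_star ?mulDl ?mulDr lf.
Qed.

Lemma dual_on_lact a Phi : dual_on inEA Phi -> dual_on inEA (fun U => Phi (lactE mul a U)).
Proof.
move=> [lin [c [c0 bc]]]; split.
  by move=> k T U iT iU /=; rewrite -lin //; apply: inE_lact.
exists (c * `|a|); split; first by rewrite mulr_ge0.
move=> T t iT t0 bT; apply: le_trans (bc _ _ (inE_lact a iT) _ (bnd_lact a t0 bT)) _.
  by rewrite mulr_ge0.
by rewrite (mulrC t) mulrA.
Qed.

Lemma dual_on_ract a Phi : dual_on inEA Phi -> dual_on inEA (fun U => Phi (ractE mul U a)).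
Proof.
move=> [lin [c [c0 bc]]]; split.
  by move=> k T U iT iU /=; rewrite -lin //; apply: inE_ract.
exists (c * `|a|); split; first by rewrite mulr_ge0.
move=> T t iT t0 bT; apply: le_trans (bc _ _ (inE_ract a iT) _ (bnd_ract a t0 bT)) _.
  by rewrite mulr_ge0.
by rewrite (mulrC t) mulrA.
Qed.

Lemma swc_comb k T U : swc T -> swc U -> swc (fun b c => k * T b c + U b c).
Proof.
move=> [iT hT] [iU hU]; split; first exact: inE_comb.
move=> Phi dPhi; have [lin _] := dPhi.
have [lT rT] := hT _ dPhi; have [lU rU] := hU _ dPhi; split.
- have -> : (fun a => Phi (lactE mul a (fun b c => k * T b c + U b c))) =
      (fun a => k * Phi (lactE mul a T) + Phi (lactE mul a U)).
    by apply/funext => a; rewrite -lin //; apply: inE_lact.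
  exact: wsc_comb.
- have -> : (fun a => Phi (ractE mul (fun b c => k * T b c + U b c) a)) =
      (fun a => k * Phi (ractE mul T a) + Phi (ractE mul U a)).
    by apply/funext => a; rewrite -lin //; apply: inE_ract.
  exact: wsc_comb.
Qed.

Lemma swc0 : swc (fun _ _ => 0).
Proof.
split; first exact: inE0.
by move=> Phi _; split; exact: (wsc_cst (Phi (fun _ _ => 0))).
Qed.

Lemma swc_lact a T : swc T -> swc (lactE mul a T).
Proof.
move=> [iT hT]; split; first exact: inE_lact.
move=> Phi dPhi; split.
- have -> : (fun a' => Phi (lactE mul a' (lactE mul a T))) =
      (fun x => (fun y => Phi (lactE mul y T)) (mul x a)).
    apply/funext => a' /=; congr Phi; apply/funext => b; apply/funext => c.
    by rewrite /lactE mulA.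
  exact: (wsc_mulr a (hT _ dPhi).1).
- exact: (hT _ (dual_on_lact a dPhi)).2.
Qed.

Lemma swc_ract a T : swc T -> swc (ractE mul T a).
Proof.
move=> [iT hT]; split; first exact: inE_ract.
move=> Phi dPhi; split.
- exact: (hT _ (dual_on_ract a dPhi)).1.
- have -> : (fun a' => Phi (ractE mul (ractE mul T a) a')) =
      (fun x => (fun y => Phi (ractE mul T y)) (mul a x)).
    apply/funext => a' /=; congr Phi; apply/funext => b; apply/funext => c.
    by rewrite /ractE mulA.
  exact: (wsc_mull a (hT _ dPhi).2).
Qed.

Lemma swc_pi f : Ast f -> swc (pi_star mul f).
Proof.
move=> Af; split; first exact: inE_pi.
move=> Phi [lin [c [c0 bc]]].
have [x rep] : exists x : A, forall h, Ast h -> Phi (pi_star mul h) = h x.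
  case: DB => _ _ _ _ onto; apply: onto.
    by move=> k g h Ag Ah; rewrite -lin //; apply: inE_pi.
  exists c; split => // g t Ag t0 bg.
  exact: bc (inE_pi Ag) t0 (bnd_pi t0 bg).
split.
- have -> : (fun a => Phi (lactE mul a (pi_star mul f))) = dual_ract mul f x.
    apply/funext => a; rewrite /dual_ract.
    have -> : lactE mul a (pi_star mul f) = pi_star mul (dual_lact mul a f).
      by apply/funext => b; apply/funext => c'; rewrite /lactE /pi_star /dual_lact mulA.
    by rewrite rep //; exact: Astl.
  exact/wsc_Ast/Astr.
- have -> : (fun a => Phi (ractE mul (pi_star mul f) a)) = dual_lact mul x f.
    apply/funext => a; rewrite /dual_lact.
    have -> : ractE mul (pi_star mul f) a = pi_star mul (dual_ract mul f a).
      by apply/funext => b; apply/funext => c'; rewrite /ractE /pi_star /dual_ract mulA.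
    by rewrite rep //; exact: Astr.
  exact/wsc_Ast/Astl.
Qed.

Lemma pos_real (t : R[i]) : 0 <= t -> t = (Rec t)%:C /\ 0 <= Rec t.
Proof. by case: t => a b; rewrite lecE /= => /andP[/eqP -> a0]. Qed.

Lemma Re_le_norm (z : R[i]) : (Rec z)%:C <= `|z|.
Proof.
apply: le_trans (normc_ge_Re z); rewrite lecR; exact: ler_norm.
Qed.

Lemma ReD (z w : R[i]) : Rec (z + w) = Rec z + Rec w.
Proof. by case: z; case: w. Qed.

Lemma inE_scale k T : inEA T -> inEA (fun b c => k * T b c).
Proof.
move=> iT; have := inE_comb k iT inE0.
by have -> : (fun b c => k * T b c + 0) = (fun b c => k * T b c) by
  apply/funext => b; apply/funext => c; rewrite addr0.
Qed.

Lemma swc_scale k T : swc T -> swc (fun b c => k * T b c).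
Proof.
move=> iT; have := swc_comb k iT swc0.
by have -> : (fun b c => k * T b c + 0) = (fun b c => k * T b c) by
  apply/funext => b; apply/funext => c; rewrite addr0.
Qed.


Lemma Re_form (x y : R) : Rec (x%:C - 'i%C * y%:C) = x.
Proof. by rewrite /=; simpc. Qed.
Lemma iiE : 'i%C * 'i%C = -1 :> R[i].
Proof. by rewrite -expr2 sqr_i. Qed.
Lemma Rei (z : R[i]) : Rec ('i%C * z) = - Imc z.
Proof. by rewrite mulrC ReiNIm. Qed.

Definition nrm (T : A -> A -> R[i]) : R :=
  inf [set t : R | 0 <= t /\ bil_norm_le T t%:C].

Lemma nrm_ge T t : 0 <= t -> bil_norm_le T t%:C -> nrm T <= t.
Proof.
move=> t0 bt; apply: ge_inf; last by split.
by exists 0 => z [].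
Qed.

Lemma nrm_lb T x : inEA T ->
  (forall t, 0 <= t -> bil_norm_le T t%:C -> x <= t) -> x <= nrm T.
Proof.
move=> [_ [t [t0 bt]]] h; apply: lb_le_inf.
  have [e r0] := pos_real t0; exists (Rec t); split => //; by rewrite -e.
by move=> y [y0 yb]; exact: h.
Qed.

Lemma nrm_ge0 T : inEA T -> 0 <= nrm T.
Proof. by move=> iT; apply: nrm_lb. Qed.

Lemma nrm_add T U : inEA T -> inEA U ->
  nrm (fun b c => T b c + U b c) <= nrm T + nrm U.
Proof.
move=> iT iU.
have key tT tU : 0 <= tT -> bil_norm_le T tT%:C -> 0 <= tU -> bil_norm_le U tU%:C ->
    nrm (fun b c => T b c + U b c) <= tT + tU.
  move=> t0 bT u0 bU; apply: nrm_ge; first by rewrite addr_ge0.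
  move=> b c; rewrite rmorphD /= !mulrDl.
  exact: le_trans (ler_normD _ _) (lerD (bT b c) (bU b c)).
have h1 tT : 0 <= tT -> bil_norm_le T tT%:C ->
    nrm (fun b c => T b c + U b c) - tT <= nrm U.
  move=> t0 bT; apply: nrm_lb => // tU u0 bU.
  have := key _ _ t0 bT u0 bU; lra.
have : nrm (fun b c => T b c + U b c) - nrm U <= nrm T.
  apply: nrm_lb => // tT t0 bT; have := h1 _ t0 bT; lra.
lra.
Qed.

Lemma bil_scale (T : A -> A -> R[i]) t (r : R) : 0 <= r -> bil_norm_le T t ->
  bil_norm_le (fun b c => r%:C * T b c) (r%:C * t).
Proof.
move=> r0 bT b c; rewrite normrM ger0_norm ?ler0c // -!mulrA.
by rewrite ler_wpM2l ?ler0c // !mulrA; exact: bT.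
Qed.

Lemma nrm_scale_le (r : R) T : 0 < r -> inEA T ->
  nrm (fun b c => r%:C * T b c) <= r * nrm T.
Proof.
move=> r0 iT; rewrite mulrC -ler_pdivrMr //; apply: nrm_lb => // t t0 bt.
rewrite ler_pdivrMr // mulrC; apply: nrm_ge; first by rewrite mulr_ge0 // ltW.
by rewrite rmorphM; exact: bil_scale (ltW r0) bt.
Qed.

Lemma nrm_scale (r : R) T : 0 < r -> inEA T ->
  nrm (fun b c => r%:C * T b c) = r * nrm T.
Proof.
move=> r0 iT; apply/le_anti/andP; split; first exact: nrm_scale_le.
have ri : 0 < r^-1 by rewrite invr_gt0.
have := nrm_scale_le ri (inE_scale r%:C iT).
have -> : (fun b c => r^-1%:C * (r%:C * T b c)) = T.
  apply/funext => b; apply/funext => c.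
  by rewrite mulrA -rmorphM mulVf ?gt_eqF // mul1r.
by rewrite -(ler_pM2l r0) mulrA mulfV ?gt_eqF // mul1r.
Qed.

Lemma extend_M (M : (A -> A -> R[i]) -> R[i]) : dual_on swc M ->
  exists m, dual_on inEA m /\ forall T, swc T -> m T = M T.
Proof.
move=> [Mlin [c [c0 Mb]]].
have [ce c'0] := pos_real c0; set c' := Rec c in ce c'0.
have M0 : M (fun _ _ => 0) = 0.
  have := Mlin 1 _ _ swc0 swc0.
  have -> : (fun b c : A => 1 * 0 + 0) = (fun _ _ => 0 : R[i]).
    by apply/funext => b; apply/funext => c''; rewrite mul1r addr0.
  rewrite mul1r => h.
  by have := congr1 (fun z => z - M (fun _ _ => 0)) h; rewrite subrr addrK => <-.
have MZ k T : swc T -> M (fun b c => k * T b c) = k * M T.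
  move=> sT; have := Mlin k _ _ sT swc0; rewrite M0 addr0 => <-.
  by congr M; apply/funext => b; apply/funext => c''; rewrite addr0.
have D0 : (fun T : V => inEA T) 0 by rewrite V0; exact: inE0.
have DL : forall (r : R) (x y : V), inEA x -> inEA y -> inEA (r *: x + y).
  by move=> r x y ix iy; rewrite VE; exact: inE_comb.
have SD : (fun T : V => swc T) `<=` (fun T : V => inEA T) by move=> T [].
have S0 : (fun T : V => swc T) 0 by rewrite V0; exact: swc0.
have SL : forall (r : R) (x y : V), swc x -> swc y -> swc (r *: x + y).
  by move=> r x y ix iy; rewrite VE; exact: swc_comb.
have pD : forall x y : V, inEA x -> inEA y ->
    c' * nrm (x + y) <= c' * nrm x + c' * nrm y.
  by move=> x y ix iy; rewrite -mulrDr ler_wpM2l // VD; exact: nrm_add.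
have pZ : forall (r : R) (x : V), inEA x -> 0 < r ->
    c' * nrm (r *: x) = r * (c' * nrm x).
  move=> r x ix r0.
  have -> : r *: x = (fun b c => r%:C * x b c : R[i]).
    by rewrite -[r *: x]addr0 VE; apply/funext => b; apply/funext => c''; rewrite addr0.
  by rewrite nrm_scale // mulrCA.
have fL : forall (r : R) (x y : V), swc x -> swc y ->
    Rec (M (r *: x + y)) = r * Rec (M x) + Rec (M y).
  by move=> r x y sx sy; rewrite VE Mlin // ReD ReM.
have fp : forall x : V, swc x -> Rec (M x) <= c' * nrm x.
  move=> x sx.
  have bnd t : 0 <= t -> bil_norm_le x t%:C -> Rec (M x) <= c' * t.
    move=> t0 bt; rewrite -lecR rmorphM /= -ce.
    apply: le_trans (Re_le_norm _) _; apply: Mb => //; by rewrite ler0c.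
  have [c'z|c'p] := eqVneq c' 0.
    have [_ [t [t0 bt]]] := sx.1; have [te tr] := pos_real t0.
    rewrite te in bt; have := bnd _ tr bt; by rewrite c'z !mul0r.
  have c'gt : 0 < c' by rewrite lt_def c'p.
  rewrite mulrC -ler_pdivrMr //; apply: nrm_lb; first exact: sx.1.
  by move=> t t0 bt; rewrite ler_pdivrMr // mulrC; exact: bnd.
have [g [gL gS gp]] := @hahn_banach R V (fun T : V => inEA T) (fun T : V => swc T)
  (fun T : V => c' * nrm T) (fun T : V => Rec (M T)) D0 DL SD S0 SL pD pZ fL fp.
have gLc (r : R) T U : inEA T -> inEA U ->
    g (fun x y => r%:C * T x y + U x y) = r * g T + g U.
  by move=> iT iU; rewrite -VE; exact: gL.
have g0 : g (fun _ _ => 0) = 0.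
  have := gLc 1 _ _ inE0 inE0.
  have -> : (fun x y : A => 1%:C * 0 + 0) = (fun _ _ => 0 : R[i]).
    by apply/funext => b; apply/funext => c''; rewrite mul1r addr0.
  rewrite mul1r => h.
  by have := congr1 (fun z => z - g (fun _ _ => 0)) h; rewrite subrr addrK => <-.
pose m T := (g T)%:C - 'i%C * (g (fun x y => 'i%C * T x y))%:C.
have mlin k T U : inEA T -> inEA U -> m (fun x y => k * T x y + U x y) = k * m T + m U.
  move=> iT iU.
  set a := Rec k; set b := Imc k.
  pose iTT := fun x y => 'i%C * T x y; pose iUU := fun x y => 'i%C * U x y.
  have iiT : inEA iTT by exact: inE_scale.
  have iiU : inEA iUU by exact: inE_scale.
  have E1 : (fun x y => k * T x y + U x y) =
      (fun x y => a%:C * T x y + (fun x' y' => b%:C * iTT x' y' + U x' y') x y).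
    apply/funext => x; apply/funext => y; rewrite /= {1}[k]complexE /iTT -/a -/b; ring.
  have E2 : (fun x y => 'i%C * (k * T x y + U x y)) =
      (fun x y => a%:C * iTT x y + (fun x' y' => (- b)%:C * T x' y' + iUU x' y') x y).
    apply/funext => x; apply/funext => y; rewrite /= {1}[k]complexE /iTT /iUU -/a -/b.
    rewrite rmorphN.
    transitivity (a%:C * ('i%C * T x y) + ('i%C * 'i%C) * b%:C * T x y + 'i%C * U x y); first by ring.
    by rewrite iiE; ring.
  rewrite /m E1 E2 !gLc //; last 2 first.
  - by apply: inE_comb => //; apply: inE_scale.
  - by apply: inE_comb.
  rewrite [in RHS](complexE k) -/a -/b.
  rewrite !rmorphD !rmorphM !rmorphN /=.
  apply/eqP; rewrite -subr_eq0; apply/eqP.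
  transitivity (b%:C * (g iTT)%:C * (1 + 'i%C * 'i%C)); first by rewrite /iTT; ring.
  by rewrite iiE addrN mulr0.
have mZ w T : inEA T -> m (fun x y => w * T x y) = w * m T.
  move=> iT; have := mlin w _ _ iT inE0.
  have -> : (fun x y => w * T x y + 0) = (fun x y => w * T x y).
    by apply/funext => x; apply/funext => y; rewrite addr0.
  move=> ->; rewrite /m.
  have -> : (fun x y : A => 'i%C * 0) = (fun _ _ => 0 : R[i]).
    by apply/funext => x; apply/funext => y; rewrite mulr0.
  by rewrite g0 mulr0 subr0 addr0.
exists m; split; first split.
- by move=> k T U iT iU; exact: mlin.
- exists c; split => // T t iT t0 bt.
  have [te tr] := pos_real t0; rewrite te in bt.
  have [mz|mnz] := eqVneq (m T) 0; first by rewrite mz normr0 mulr_ge0.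
  set w := `|m T| / m T.
  have nw : `|w| = 1 by rewrite /w normf_div normr_id mulfV // normr_eq0.
  have iwT : inEA (fun x y => w * T x y) by exact: inE_scale.
  have mw : m (fun x y => w * T x y) = `|m T| by rewrite mZ // /w divfK.
  have [ne _] := pos_real (normr_ge0 (m T)).
  have bw : bil_norm_le (fun x y => w * T x y) (Rec t)%:C.
    by move=> x y; rewrite normrM nw mul1r; exact: bt.
  have le1 : g (fun x y => w * T x y) <= c' * Rec t.
    apply: le_trans (gp _ iwT) _; apply: ler_wpM2l => //; exact: nrm_ge.
  rewrite ne te ce -rmorphM lecR; apply: le_trans le1.
  by rewrite -mw /m Re_form.
- move=> T sT; rewrite /m gS //.
  have siT : swc (fun x y => 'i%C * T x y) by exact: swc_scale.
  rewrite gS // MZ // Rei rmorphN mulrN opprK.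
  by rewrite [RHS]complexE.
Qed.

End Main.

Theorem lemma2p3 (R : realType) (A : completeNormedModType R[i])
  (mul : A -> A -> A) (Ast : set (A -> R[i])) :
  banach_algebra mul ->
  dual_banach_algebra mul Ast ->
  connes_amenable mul Ast ->
  johnson_pseudo_connes_amenable mul Ast.
Proof.
move=> BA DB [M [dM Mcomm [e [eM eR]]]].
have [m [dm mM]] := extend_M BA DB dM.
have mulA a b c : mul a (mul b c) = mul (mul a b) c by case: BA.
have Astl a f : Ast f -> Ast (dual_lact mul a f).
  by case: DB => [_ _ h _ _] /(h a) [].
have Astr a f : Ast f -> Ast (dual_ract mul f a).
  by case: DB => [_ _ h _ _] /(h a) [].
have fea f a : Ast f -> f (mul e a) = f a.
  move=> Af.
  have -> : f (mul e a) = dual_lact mul a f e by [].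
  rewrite eM; last exact: Astl.
  have -> : pi_star mul (dual_lact mul a f) = lactE mul a (pi_star mul f).
    by apply/funext => b; apply/funext => c; rewrite /lactE /pi_star /dual_lact mulA.
  rewrite -Mcomm; last exact: swc_pi.
  have -> : ractE mul (pi_star mul f) a = pi_star mul (dual_ract mul f a).
    by apply/funext => b; apply/funext => c; rewrite /ractE /pi_star /dual_ract mulA.
  by rewrite -eM; [rewrite /dual_ract eR | exact: Astr].
exists unit, (fun _ _ => True), (fun _ => m), (fun _ => e); split.
- by split; [exact: (inhabits tt) | split => // ; split => // i j; exists tt].
- by move=> _.
- move=> _ a T sT; rewrite !mM; [exact: Mcomm | exact: swc_lact | exact: swc_ract].
- by move=> _ f Af; rewrite mM; [exact: eM | exact: swc_pi].
- move=> a eps eps0; exists tt => _ _.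
  have e20 : 0 < eps / 2 by rewrite divr_gt0.
  have [_ _ _ iso _] := DB.
  have [f [Af _ hf]] := iso (mul e a - a) _ e20.
  have f0 : f (mul e a - a) = 0.
    have [lf _] : in_dual f by case: DB => [[h _] _ _ _ _]; exact: h.
    have -> : mul e a - a = (-1) *: a + mul e a by rewrite scaleN1r addrC.
    by rewrite lf fea // mulN1r addNr.
  rewrite f0 normr0 subr_le0 in hf.
  apply: le_lt_trans hf _.
  by rewrite ltr_pdivrMr // ltr_pMr // ltr1n.
Qed.
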